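(* Let $\mathcal{I}_1\sqcup\cdots\sqcup\mathcal{I}_K=[N]$ be a partition of the modes into nonempty cells, let $\sigma_n$ denote the index of the cell containing mode $n$, let $\tilde I_1,\dots,\tilde I_K$ be positive integers and $I_n=\tilde I_{\sigma_n}$. Let $\mathbf{A}_k\in\mathbb{R}^{\tilde I_k\times r}$ for $k\in[K]$. If $\mathcal{Y}\in\mathbb{R}^{I_1\times\cdots\times I_N}$ is symmetric with respect to the partition $\mathcal{I}_1\sqcup\cdots\sqcup\mathcal{I}_K$, then for every $k\in[K]$ and all $u,v\in\mathcal{I}_k$, $$\mathbf{Y}_{(u)}\Big(\textstyle\bigodot_{j\neq u}\mathbf{A}_{\sigma_j}\Big) = \mathbf{Y}_{(v)}\Big(\textstyle\bigodot_{j\neq v}\mathbf{A}_{\sigma_j}\Big),$$ where $\bigodot_{j\neq t}\mathbf{A}_{\sigma_j} = \mathbf{A}_{\sigma_N}\odot\cdots\odot\mathbf{A}_{\sigma_{t+1}}\odot\mathbf{A}_{\sigma_{t-1}}\odot\cdots\odot\mathbf{A}_{\sigma_1}$.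
   Context: A tensor $\mathcal{Y}\in\mathbb{R}^{I_1\times\cdots\times I_N}$ is symmetric with respect to the partition if $y_{(i_{\pi(1)},\dots,i_{\pi(N)})}=y_{(i_1,\dots,i_N)}$ for every index $(i_1,\dots,i_N)$ and every permutation $\pi$ of $[N]$ mapping each cell $\mathcal{I}_\ell$ to itself. $\odot$ is the Khatri–Rao product: $\mathbf{A}\odot\mathbf{B}$ has $j$-th column $\mathbf{A}_{:,j}\otimes\mathbf{B}_{:,j}$. The mode-$t$ matricization $\mathbf{Y}_{(t)}\in\mathbb{R}^{I_t\times\prod_{j\neq t}I_j}$ places $y_{i_1,\dots,i_N}$ in row $i_t$ and column $1+\sum_{k\neq t}(i_k-1)\prod_{m<k,\,m\neq t}I_m$. *)

(* Defs.v *)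
From mathcomp Require Import all_boot all_order all_algebra all_fingroup.
From mathcomp Require Export reals.
Set Implicit Arguments. Unset Strict Implicit. Unset Printing Implicit Defensive.
Import GRing.Theory Num.Theory.
Local Open Scope ring_scope.

(* Conventions: modes are 0-based ('I_N), cells are 0-based ('I_K), tensor
   indices are 0-based naturals.  The partition of the modes into K cells is
   given by sigma : 'I_N -> 'I_K (mode n lies in cell sigma n).             *)

Section Defs.
Variable R : nzRingType.

(* entry access of a matrix by a natural row index (0 outside the range) *)
Definition mxat m n (M : 'M[R]_(m, n)) (i : nat) (c : 'I_n) : R :=
  match insub i : option 'I_m with Some i' => M i' c | None => 0 end.

(* Khatri-Rao product: column j of (A ⊙ B) is A_{:,j} ⊗ B_{:,j};
   row (0-based) i corresponds to rows (i %/ m2) of A and (i %% m2) of B. *)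
Definition khatri_rao m1 m2 r (A : 'M[R]_(m1, r)) (B : 'M[R]_(m2, r))
  : 'M[R]_(m1 * m2, r) :=
  \matrix_(i, j) (mxat A (i %/ m2) j * mxat B (i %% m2) j).

Variables (N K r : nat) (sigma : 'I_N -> 'I_K) (It : 'I_K -> nat).
Variable A : forall k : 'I_K, 'M[R]_(It k, r).

(* I_n = It (sigma n), extended to nat indices (1 outside [0,N)) *)
Definition dimn (n : nat) : nat :=
  match insub n : option 'I_N with Some n' => It (sigma n') | None => 1%N end.

Definition Amat (n : nat) : 'M[R]_(dimn n, r) :=
  match insub n : option 'I_N as o
    return 'M[R]_(match o with Some n' => It (sigma n') | None => 1%N end, r)
  with Some n' => A (sigma n') | None => 0 end.

(* Pn t n = prod_{m < n, m <> t} I_m  (the stride of mode n in the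
   mode-t matricization, and the number of rows of the partial KR product) *)
Fixpoint Pn (t n : nat) : nat :=
  match n with
  | 0 => 1%N
  | n'.+1 => if n' == t then Pn t n' else (dimn n' * Pn t n')%N
  end.

(* krn t n = A_{sigma_n} ⊙ ... ⊙ A_{sigma_1} with mode t omitted
   (1-based in the paper; here modes n-1,...,0), the empty product being
   the 1 x r all-ones matrix (neutral for ⊙). *)
Fixpoint krn (t n : nat) : 'M[R]_(Pn t n, r) :=
  match n return 'M[R]_(Pn t n, r) with
  | 0 => const_mx 1
  | n'.+1 =>
    if n' == t as b
       return 'M[R]_(if b then Pn t n' else (dimn n' * Pn t n')%N, r)
    then krn t n'
    else khatri_rao (Amat n') (krn t n')
  end.

Definition kr_except (t : 'I_N) : 'M[R]_(Pn t N, r) := krn t N.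

(* A tensor in R^{I_1 x ... x I_N}: a function on index tuples
   (only the values at valid indices i_n < I_n are ever used). *)
Definition tensor := {ffun 'I_N -> nat} -> R.

Definition valid_index (i : {ffun 'I_N -> nat}) : Prop :=
  forall n : 'I_N, (i n < It (sigma n))%N.

Definition partition_symmetric (Y : tensor) : Prop :=
  forall p : {perm 'I_N}, (forall n, sigma (p n) = sigma n) ->
  forall i : {ffun 'I_N -> nat}, valid_index i ->
    Y [ffun n => i (p n)] = Y i.

(* mode-t matricization: y_i sits in row i_t and column
   sum_{k <> t} i_k * prod_{m < k, m <> t} I_m  (0-based version of the
   paper's formula); written via the inverse (mixed-radix decoding). *)
Definition matricize (Y : tensor) (t : 'I_N) : 'M[R]_(It (sigma t), Pn t N) :=
  \matrix_(a, col)
    Y [ffun k : 'I_N => if k == t then (a : nat)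
                        else ((col %/ Pn t k) %% dimn k)%N].

End Defs.

Lemma same_cell_dim N K (sigma : 'I_N -> 'I_K) (It : 'I_K -> nat)
  (k : 'I_K) (u v : 'I_N) :
  sigma u = k -> sigma v = k -> It (sigma u) = It (sigma v).
Proof. by move=> -> ->. Qed.

(* Main.v *)
Require Import Defs.
From mathcomp Require Import all_boot all_order all_algebra all_fingroup.
From mathcomp Require Import reals.
From mathcomp Require Import zify ring.
Set Implicit Arguments. Unset Strict Implicit. Unset Printing Implicit Defensive.
Import GRing.Theory Num.Theory.

Section Arith.
Variables (N K : nat) (sigma : 'I_N -> 'I_K) (It : 'I_K -> nat).
Hypothesis It_pos : forall k : 'I_K, (0 < It k)%N.
Local Notation dimn := (dimn sigma It).
Local Notation Pn := (Pn sigma It).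

Lemma dimn_pos n : (0 < dimn n)%N.
Proof. by rewrite /Defs.dimn; case: insub. Qed.

Lemma dimn_ord (k : 'I_N) : dimn k = It (sigma k).
Proof. by rewrite /Defs.dimn valK. Qed.

Lemma Pn_pos t n : (0 < Pn t n)%N.
Proof.
elim: n => //= n IH; case: ifP => // _; by rewrite muln_gt0 dimn_pos.
Qed.

Lemma PnS t n : n != t -> Pn t n.+1 = (dimn n * Pn t n)%N.
Proof. by move=> /negbTE /= ->. Qed.

Lemma Pn_dvd t m n : (m <= n)%N -> Pn t m %| Pn t n.
Proof.
elim: n => [|n IH]; first by rewrite leqn0 => /eqP ->.
rewrite leq_eqVlt => /orP [/eqP -> //|]; rewrite ltnS => /IH H /=.
by case: ifP => // _; apply: dvdn_mull.
Qed.

Lemma digit_mod t k n col : (k < n)%N -> k != t ->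
  (col %% Pn t n %/ Pn t k %% dimn k = col %/ Pn t k %% dimn k)%N.
Proof.
move=> kn kt.
have /dvdnP [c Hc] : Pn t k.+1 %| Pn t n by apply: Pn_dvd.
rewrite PnS // in Hc.
rewrite {2}(divn_eq col (Pn t n)) Hc.
have -> : (col %/ (c * (dimn k * Pn t k)) * (c * (dimn k * Pn t k)) + col %% (c * (dimn k * Pn t k)) =
   (col %/ (c * (dimn k * Pn t k)) * c * dimn k) * Pn t k + col %% (c * (dimn k * Pn t k)))%N by ring.
by rewrite divnMDl ?Pn_pos // modnMDl.
Qed.

Definition enc t n (g : nat -> nat) := (\sum_(k < n | (k : nat) != t) g k * Pn t k)%N.

Lemma encS t n g : enc t n.+1 g = (enc t n g + (if n != t then g n * Pn t n else 0))%N.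
Proof. by rewrite /enc big_mkcond big_ord_recr /= -big_mkcond. Qed.

Lemma enc_digits t n g : (forall k, (k < n)%N -> k != t -> (g k < dimn k)%N) ->
  (enc t n g < Pn t n)%N /\
  forall k, (k < n)%N -> k != t -> (enc t n g %/ Pn t k %% dimn k)%N = g k.
Proof.
elim: n => [|n IH] Hg; first by rewrite /enc big_ord0.
have [|E1 E2] := IH; first by move=> k kn; apply: Hg; apply: ltnW.
rewrite encS; case: (eqVneq n t) => [nt|nt] /=.
  have -> : (n == t) = true by apply/eqP.
  rewrite addn0; split => // k; rewrite ltnS leq_eqVlt => /orP [/eqP ->|]; first by rewrite nt eqxx.
  exact: E2.
have gn := Hg n (ltnSn n) nt.
rewrite (negbTE nt); split.
  have : (g n).+1 * Pn t n <= dimn n * Pn t n by rewrite leq_pmul2r ?Pn_pos.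
  rewrite mulSn; move: E1; lia.
move=> k; rewrite ltnS leq_eqVlt => /orP [/eqP ->|kn] kt.
  by rewrite addnC divnMDl ?Pn_pos // divn_small // addn0 modn_small.
have /dvdnP [c Hc] : Pn t k.+1 %| Pn t n by apply: Pn_dvd.
rewrite PnS // in Hc.
rewrite Hc.
have -> : (enc t n g + g n * (c * (dimn k * Pn t k)) = (g n * c * dimn k) * Pn t k + enc t n g)%N by ring.
by rewrite divnMDl ?Pn_pos // modnMDl; apply: E2.
Qed.

Lemma enc_dec t n col : (col < Pn t n)%N ->
  enc t n (fun k => col %/ Pn t k %% dimn k)%N = col.
Proof.
elim: n col => [|n IH] col /=; first by rewrite /enc big_ord0; case: col.
rewrite encS; case: (eqVneq n t) => [nt|nt] /=; first by rewrite addn0 => /IH.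
move=> hc.
have hq : (col %/ Pn t n < dimn n)%N by rewrite ltn_divLR ?Pn_pos.
rewrite (modn_small hq).
have -> : enc t n (fun k => col %/ Pn t k %% dimn k)%N = enc t n (fun k => col %% Pn t n %/ Pn t k %% dimn k)%N.
  apply: eq_bigr => k kt; by rewrite digit_mod.
by rewrite IH ?ltn_pmod ?Pn_pos // addnC -divn_eq.
Qed.
End Arith.
Local Open Scope ring_scope.

Lemma mxatE (R : nzRingType) m n (M : 'M[R]_(m,n)) i c (h : (i < m)%N) :
  mxat M i c = M (Ordinal h) c.
Proof. by rewrite /mxat insubT. Qed.

Section KR.
Variables (R : comNzRingType) (N K r : nat) (sigma : 'I_N -> 'I_K) (It : 'I_K -> nat).
Variable A : forall k : 'I_K, 'M[R]_(It k, r).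
Hypothesis It_pos : forall k : 'I_K, (0 < It k)%N.
Local Notation dimn := (dimn sigma It).
Local Notation Pn := (Pn sigma It).

Lemma mxat_Amat (k : 'I_N) i c : mxat (Amat sigma A k) i c = mxat (A (sigma k)) i c.
Proof.
rewrite /Amat /Defs.dimn; move: (valK k); case: (insub (val k)) => // k' [->] //.
Qed.

Lemma krn_entry t n col c : (col < Pn t n)%N ->
  mxat (krn sigma A t n) col c =
  \prod_(k < n | (k : nat) != t) mxat (Amat sigma A k) (col %/ Pn t k %% dimn k)%N c.
Proof.
elim: n col => [|n IH] col.
  by rewrite big_ord0 /= ltnS leqn0 => /eqP ->; rewrite (mxatE _ _ (ltn0Sn 0)) mxE.
rewrite big_mkcond big_ord_recr /= -big_mkcond /=.
case: eqP => [nt|nt] hc.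
  by rewrite IH // mulr1.
rewrite /khatri_rao (mxatE _ _ hc) mxE /=.
have hq : (col %/ Pn t n < dimn n)%N.
  by rewrite ltn_divLR //; exact: Pn_pos.
rewrite (modn_small hq) IH; last by rewrite ltn_pmod //; exact: Pn_pos.
rewrite mulrC; congr (_ * _).
apply: eq_bigr => k kt; rewrite digit_mod //.
Qed.
End KR.

Section Main.
Variables (R : comNzRingType) (N K r : nat) (sigma : 'I_N -> 'I_K) (It : 'I_K -> nat).
Variable A : forall k : 'I_K, 'M[R]_(It k, r).
Hypothesis It_pos : forall k : 'I_K, (0 < It k)%N.
Local Notation Pn := (Pn sigma It).

Let Mb := (\max_(k : 'I_K) It k)%N.
Lemma It_le k : (It k <= Mb)%N. Proof. exact: leq_bigmax. Qed.

Lemma valinord n m : (m < n.+1)%N -> val (@inord n m) = m.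
Proof. exact: inordK. Qed.

Definition Pt (t : 'I_N) (a : nat) (f : {ffun 'I_N -> 'I_Mb.+1}) : bool :=
  [forall k, (f k < It (sigma k))%N] && (f t == a :> nat).

Definition decN (t : 'I_N) (a col : nat) : {ffun 'I_N -> nat} :=
  [ffun k => if k == t then a else (col %/ Pn t k %% It (sigma k))%N].

Definition gof (f : {ffun 'I_N -> 'I_Mb.+1}) (n : nat) : nat :=
  if insub n is Some n' then val (f n') else 0%N.

Lemma sum_decode (t : 'I_N) a (H : {ffun 'I_N -> nat} -> R) : (a < It (sigma t))%N ->
  \sum_(col < Pn t N) H (decN t a col) = \sum_(f | Pt t a f) H [ffun k => val (f k)].
Proof.
move=> ha.
have Ppos : (0 < Pn t N)%N by apply: Pn_pos.
have hdec : forall (j : nat) k, (decN t a j k < Mb.+1)%N.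
  move=> j k; rewrite ffunE ltnS; case: ifP => _.
    by apply: leq_trans (It_le _); rewrite -ltnS; apply: leq_trans ha _.
  apply: leq_trans (It_le (sigma k)); apply: ltnW; rewrite ltn_pmod //.
set h := fun j : 'I_(Pn t N) => [ffun k => inord (decN t a j k)] : {ffun 'I_N -> 'I_Mb.+1}.
have hval : forall j : 'I_(Pn t N), [ffun k => val (h j k)] = decN t a j.
  by move=> j; apply/ffunP => k; rewrite ffunE /h ffunE valinord.
have hP : forall j : 'I_(Pn t N), Pt t a (h j).
  move=> j; apply/andP; split.
    apply/forallP => k; rewrite /h ffunE valinord // ffunE; case: ifP => [/eqP -> //|_].
    by rewrite ltn_pmod.
  by rewrite /h ffunE valinord // ffunE eqxx.
rewrite (reindex h); last first.
  exists (fun f => Ordinal (ltn_pmod (enc sigma It t N (gof f)) Ppos)).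
    move=> j _; apply: val_inj => /=.
    have -> : enc sigma It t N (gof (h j)) = enc sigma It t N (fun k => j %/ Pn t k %% dimn sigma It k)%N.
      apply: eq_bigr => k kt; rewrite /gof valK /h ffunE valinord // ffunE.
      have kt2 : k != t := kt.
      by rewrite (negbTE kt2) dimn_ord.
    by rewrite enc_dec // modn_small.
  move=> f; rewrite inE => /andP [/forallP fv /eqP ft].
  have gb : forall k, (k < N)%N -> k != t -> (gof f k < dimn sigma It k)%N.
    move=> k kN _; rewrite /gof /Defs.dimn insubT /=; exact: fv.
  have [E1 E2] := enc_digits It_pos gb.
  apply/ffunP => k; apply: val_inj; rewrite ffunE valinord // ffunE /=.
  case: ifP => [/eqP -> //|kt].
  rewrite (modn_small E1); have := E2 k (ltn_ord k); rewrite dimn_ord => -> //; last by move: kt => /negbT.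
  rewrite /gof; case: insubP => [k' _ /val_inj -> //|]; by rewrite ltn_ord.
under [in RHS]eq_bigl do rewrite hP.
by apply: eq_bigr => j _; rewrite hval.
Qed.
End Main.

Section Fin.
Variables (R : comNzRingType) (N K r : nat) (sigma : 'I_N -> 'I_K) (It : 'I_K -> nat).
Variable A : forall k : 'I_K, 'M[R]_(It k, r).
Hypothesis It_pos : forall k : 'I_K, (0 < It k)%N.
Variable Y : tensor R N.
Hypothesis Ysym : partition_symmetric sigma It Y.

Definition Ht (t : 'I_N) c (i : {ffun 'I_N -> nat}) :=
  Y i * \prod_(k | k != t) mxat (A (sigma k)) (i k) c.

Lemma entry (t : 'I_N) (a : 'I_(It (sigma t))) c :
  (matricize sigma It Y t *m kr_except sigma A t) a c =
  \sum_(f | @Pt N K sigma It t a f) Ht t c [ffun k => val (f k)].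
Proof.
rewrite -(sum_decode It_pos) //; rewrite mxE; apply: eq_bigr => j _.
rewrite mxE /Ht; congr (_ * _).
  by congr Y; apply/ffunP => k; rewrite !ffunE dimn_ord.
have -> : kr_except sigma A t j c = mxat (krn sigma A t N) j c.
  by rewrite (mxatE _ _ (ltn_ord j)); congr (_ _ _); apply: val_inj.
rewrite krn_entry //.
apply: eq_big => // k kt.
have kt2 : (k == t) = false by apply: negbTE.
by rewrite mxat_Amat /decN ffunE kt2 dimn_ord.
Qed.

Lemma swap (u v : 'I_N) a c : sigma u = sigma v ->
  \sum_(f | @Pt N K sigma It u a f) Ht u c [ffun k => val (f k)] =
  \sum_(f | @Pt N K sigma It v a f) Ht v c [ffun k => val (f k)].
Proof.
move=> huv.
set p := tperm u v.
have sp : forall n, sigma (p n) = sigma n.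
  by move=> n; rewrite /p; case: tpermP => [->|->|] //.
have pp : forall n, p (p n) = n by move=> n; rewrite /p tpermK.
pose h (f : {ffun 'I_N -> 'I_(\max_(k : 'I_K) It k).+1}) := [ffun k => f (p k)].
rewrite [RHS](reindex h); last first.
  by exists h => f _; apply/ffunP => k; rewrite !ffunE pp.
have PP : forall f, @Pt N K sigma It v a (h f) = @Pt N K sigma It u a f.
  move=> f; rewrite /Pt ffunE /p tpermR; congr (_ && _).
  apply/forallP/forallP => H k.
    by have := H (p k); rewrite ffunE pp -/p sp.
  by rewrite ffunE -sp; apply: H.
apply: eq_big => [f|f fP]; first by rewrite PP.
have fv : valid_index sigma It [ffun k => val (f k)].
  move=> n; rewrite ffunE; case/andP: fP => /forallP H _; exact: H.
rewrite /Ht -(Ysym sp fv); congr (_ * _).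
  by congr Y; apply/ffunP => k; rewrite !ffunE.
rewrite (reindex_inj (@perm_inj _ p)) /=.
apply: eq_big => [k|k _].
  by rewrite -[u in LHS](tpermR u v) (inj_eq (@perm_inj _ p)).
by rewrite /h !ffunE sp.
Qed.
End Fin.

Theorem proposition2 (R : realType) (N K r : nat)
  (sigma : 'I_N -> 'I_K)
  (cells_nonempty : forall k : 'I_K, exists n : 'I_N, sigma n = k)
  (It : 'I_K -> nat) (It_pos : forall k : 'I_K, (0 < It k)%N)
  (A : forall k : 'I_K, 'M[R]_(It k, r))
  (Y : tensor R N)
  (Ysym : partition_symmetric sigma It Y) :
  forall (k : 'I_K) (u v : 'I_N) (hu : sigma u = k) (hv : sigma v = k),
    castmx (same_cell_dim It hu hv, erefl r)
      (matricize sigma It Y u *m kr_except sigma A u)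
    = matricize sigma It Y v *m kr_except sigma A v.
Proof.
move=> k u v hu hv; apply/matrixP => a c.
rewrite castmxE /= !(entry A It_pos).
rewrite (_ : cast_ord _ c = c); last exact: val_inj.
exact: (swap A Ysym _ _ (etrans hu (esym hv))).
Qed.
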